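(* For any two mm-spaces $X$ and $Y$, \[ d_{\mathrm{conc}}(X,Y)=\inf_{\pi\in\Pi(m_X,m_Y)} d_{\mathrm{conc}}^{\pi}(X,Y). \]
   Context: An mm-space is a complete separable metric space $(X,d_X)$ with a Borel probability measure $m_X$. $\Pi(m_X,m_Y)$: Borel probability measures on $X\times Y$ with marginals $m_X,m_Y$. $\mathcal{L}ip_1(X)$ is the set of 1-Lipschitz functions $X\to\mathbb R$. For a measure space $(Z,\mu)$ and measurable $f,g:Z\to\mathbb R$, $d_{\mathrm{KF}}^\mu(f,g):=\inf\{\varepsilon\ge0:\mu(\{|f-g|>\varepsilon\})\le\varepsilon\}$; $d_{\mathrm H}^{d_{\mathrm{KF}}^\mu}$ is the associated Hausdorff distance between sets of functions. $F^*G:=G\circ F$. $d_{\mathrm{conc}}^{\pi}(X,Y):=d_{\mathrm H}^{d_{\mathrm{KF}}^\pi}(\mathrm{pr}_1^*\mathcal{L}ip_1(X),\mathrm{pr}_2^*\mathcal{L}ip_1(Y))$. $I=[0,1)$ with Lebesgue measure $\mathcal L^1$; a parameter of $X$ is a Borel $\varphi:I\to X$ with $\varphi_*\mathcal L^1=m_X$. $d_{\mathrm{conc}}(X,Y):=\inf_{\varphi,\psi}d_{\mathrm H}^{d_{\mathrm{KF}}^{\mathcal L^1}}(\varphi^*\mathcal{L}ip_1(X),\psi^*\mathcal{L}ip_1(Y))$ over parameters $\varphi,\psi$ of $X,Y$. *)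

(* Defs.v *)
From HB Require Import structures.
From mathcomp Require Import all_boot all_order all_algebra.
From mathcomp Require Import all_classical all_reals all_analysis.
Set Implicit Arguments. Unset Strict Implicit. Unset Printing Implicit Defensive.
Import Order.TTheory GRing.Theory Num.Theory.
Local Open Scope classical_set_scope.
Local Open Scope ring_scope.

Section MetricDefs.
Context {R : realType} {T : Type} (dist : T -> T -> R).

Definition is_metric : Prop :=
  [/\ (forall x y, 0 <= dist x y),
      (forall x y, dist x y = 0 <-> x = y),
      (forall x y, dist x y = dist y x) &
      (forall x y z, dist x z <= dist x y + dist y z)].

Definition metric_open (A : set T) : Prop :=
  forall x, A x -> exists2 e : R, 0 < e & [set y | dist x y < e] `<=` A.

Definition metric_complete : Prop :=
  forall u : nat -> T,
    (forall e : R, 0 < e -> exists N : nat, forall m n : nat,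
        (N <= m)%N -> (N <= n)%N -> dist (u m) (u n) < e) ->
    exists x : T, forall e : R, 0 < e -> exists N : nat, forall n : nat,
        (N <= n)%N -> dist (u n) x < e.

(* separable: a countable dense subset (indexed by nat; the spaces below
   carry a probability measure, hence are nonempty) *)
Definition metric_separable : Prop :=
  exists D : nat -> T, forall x e, 0 < e -> exists n, dist (D n) x < e.

Definition Lip1 : set (T -> R) :=
  [set f | forall x y, `|f x - f y| <= dist x y].

End MetricDefs.

Definition mm_space {R : realType} {d : measure_display} {X : measurableType d}
    (dist : X -> X -> R) : Prop :=
  [/\ is_metric dist, metric_complete dist, metric_separable dist &
      (@measurable d X) = <<s [set A | metric_open dist A] >>].

Section KyFan.
Context {R : realType} {Z : Type}.

Definition dKF (mu : set Z -> \bar R) (f g : Z -> R) : \bar R :=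
  ereal_inf [set e%:E | e in
    [set e : R | 0 <= e /\ (mu [set z | (e < `|f z - g z|)%R] <= e%:E)%E]].

Definition dH_KF (mu : set Z -> \bar R) (A B : set (Z -> R)) : \bar R :=
  Order.max
    (ereal_sup [set ereal_inf [set dKF mu f g | g in B] | f in A])
    (ereal_sup [set ereal_inf [set dKF mu f g | f in A] | g in B]).

Definition pullback {W : Type} (F : Z -> W) (S : set (W -> R)) : set (Z -> R) :=
  [set G \o F | G in S].

End KyFan.

Definition LI {R : realType} (A : set R) : \bar R :=
  @lebesgue_measure R (A `&` `[0%R, 1%R[).

Definition is_parameter {R : realType} {d : measure_display}
    {X : measurableType d} (mX : probability X R) (phi : R -> X) : Prop :=
  measurable_fun (`[0%R, 1%R[ : set (measurableTypeR R)) phi /\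
  (forall A : set X, measurable A -> LI (phi @^-1` A) = mX A).

Definition dconc {R : realType} {dX dY : measure_display}
    {X : measurableType dX} {Y : measurableType dY}
    (distX : X -> X -> R) (distY : Y -> Y -> R)
    (mX : probability X R) (mY : probability Y R) : \bar R :=
  ereal_inf [set r | exists phi psi, [/\ is_parameter mX phi,
      is_parameter mY psi &
      r = dH_KF LI (pullback phi (Lip1 distX)) (pullback psi (Lip1 distY))]].

Definition is_coupling {R : realType} {dX dY : measure_display}
    {X : measurableType dX} {Y : measurableType dY}
    (mX : probability X R) (mY : probability Y R)
    (P : probability (X * Y)%type R) : Prop :=
  (forall A : set X, measurable A -> P (A `*` setT) = mX A) /\
  (forall B : set Y, measurable B -> P (setT `*` B) = mY B).

Definition dconc_pi {R : realType} {dX dY : measure_display}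
    {X : measurableType dX} {Y : measurableType dY}
    (distX : X -> X -> R) (distY : Y -> Y -> R)
    (P : probability (X * Y)%type R) : \bar R :=
  dH_KF P (pullback fst (Lip1 distX)) (pullback snd (Lip1 distY)).

(* Main.v *)
Require Import Defs.
From HB Require Import structures.
From mathcomp Require Import all_boot all_order all_algebra.
From mathcomp Require Import all_classical all_reals all_analysis.
From mathcomp Require Import lra ring.
Set Implicit Arguments. Unset Strict Implicit. Unset Printing Implicit Defensive.
Import Order.TTheory GRing.Theory Num.Theory.
Local Open Scope classical_set_scope.


Section Itv.
Local Open Scope ring_scope.
Context {R : realType} (p : seq nat -> R).
Hypotheses (p0 : p [::] = 1) (pge : forall s, 0 <= p s)
  (psum : forall s k, \sum_(j < k) p ((j : nat) :: s) <= p s)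
  (pex : forall s u, u < p s -> exists k, u < \sum_(j < k) p ((j : nat) :: s)).

Let S s k := \sum_(j < k) p ((j : nat) :: s).

Lemma S_ge0 s k : 0 <= S s k.
Proof. by apply: sumr_ge0 => i _. Qed.

Lemma S_S s k : S s k.+1 = S s k + p (k :: s).
Proof. by rewrite /S big_ord_recr. Qed.

Lemma S_mono s k m : (k <= m)%N -> S s k <= S s m.
Proof.
elim: m => [|m IH]; first by rewrite leqn0 => /eqP ->.
rewrite leq_eqVlt => /orP[/eqP -> //|]; rewrite ltnS => /IH h.
by apply: (le_trans h); rewrite S_S lerDl.
Qed.

Fixpoint aL (s : seq nat) : R :=
  if s is k :: s' then aL s' + S s' k else 0.

Lemma aL_bounds s : 0 <= aL s /\ aL s + p s <= 1.
Proof.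
elim: s => [|k s [IH1 IH2]] /=; first by rewrite p0 add0r.
split; first by rewrite addr_ge0 // S_ge0.
rewrite -addrA -S_S; apply: le_trans IH2; rewrite lerD2l; exact: psum.
Qed.

Definition digit (s : seq nat) (t : R) : nat :=
  match pselect (exists k, t - aL s < S s k.+1) with
  | left h => ex_minn h
  | right _ => 0%N
  end.

Lemma digitP s t k : aL s <= t < aL s + p s ->
  (digit s t = k <-> aL (k :: s) <= t < aL (k :: s) + p (k :: s)).
Proof.
move=> /andP[h1 h2] /=; rewrite -addrA -S_S.
have ex : exists k, t - aL s < S s k.+1.
  have [|k0 hk] := @pex s (t - aL s); first by rewrite ltrBlDl.
  exists k0; apply: (lt_le_trans hk); exact: S_mono.
rewrite /digit; case: pselect => [h|//]; case: ex_minnP => m hm hmin.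
split.
- move=> <-; rewrite -ltrBlDl hm andbT.
  case: m hm hmin => [|m] hm hmin; first by rewrite /S big_ord0 addr0.
  rewrite -lerBrDl leNgt; apply/negP => /hmin; by rewrite ltnn.
- move=> /andP[k1 k2]; apply/eqP; rewrite eqn_leq; apply/andP; split.
    by apply: hmin; rewrite ltrBlDl.
  rewrite leqNgt; apply/negP => mk.
  have := S_mono s mk; move: hm; rewrite ltrBlDl; lra.
Qed.

Fixpoint path' (n : nat) (t : R) : seq nat :=
  if n is n'.+1 then digit (path' n' t) t :: path' n' t else [::].

Lemma size_path' n t : size (path' n t) = n.
Proof. by elim: n => //= n ->. Qed.

Lemma path'P n t : 0 <= t < 1 -> forall s, size s = n ->
  (path' n t = s <-> aL s <= t < aL s + p s).
Proof.
move=> /andP[t0 t1]; elim: n => [|n IH] [|k s] //.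
  by move=> _; rewrite p0 add0r t0 t1.
case=> hs.
have [sa sp] := aL_bounds s.
have hks : aL s <= aL (k :: s) /\ aL (k :: s) + p (k :: s) <= aL s + p s.
  split; first by rewrite /= lerDl S_ge0.
  by rewrite /= -addrA -S_S lerD2l psum.
split.
- move=> /= [hd hp]; have hi := (IH s hs).1 hp.
  by apply/(digitP k hi); rewrite -hp hd.
- move=> hk.
  have hi : aL s <= t < aL s + p s.
    move: hk hks => /andP[] ? ? [] ? ?; apply/andP; split; lra.
  have hp := (IH s hs).2 hi.
  by rewrite /= hp; congr (_ :: _); apply/(digitP k hi).
Qed.

End Itv.


Section Cells.
Local Open Scope ring_scope.
Context {R : realType} {d : measure_display} {Z : measurableType d}
  (dist : Z -> Z -> R) (D : nat -> Z).
Hypotheses (hmet : is_metric dist)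
  (hD : forall x e, 0 < e -> exists n, dist (D n) x < e)
  (hmeas : @measurable d Z = <<s [set A | metric_open dist A] >>).

Definition rr (n : nat) : R := (n.+1%:R)^-1.

Lemma rr_gt0 n : 0 < rr n.
Proof. by rewrite /rr invr_gt0 ltr0n. Qed.

Definition digZ (n : nat) (z : Z) : nat :=
  match pselect (exists k, dist (D k) z < rr n) with
  | left h => ex_minn h
  | right _ => 0%N
  end.

Lemma digZP n z k :
  digZ n z = k <-> (dist (D k) z < rr n /\ forall j, (j < k)%N -> rr n <= dist (D j) z).
Proof.
rewrite /digZ; case: pselect => [h|h]; last first.
  by exfalso; apply: h; exact: hD (rr_gt0 n).
case: ex_minnP => m hm hmin; split.
- move=> <-; split => // j jm; rewrite leNgt; apply/negP => /hmin.
  by rewrite leqNgt jm.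
- move=> [h1 h2]; apply/eqP; rewrite eqn_leq hmin //=.
  rewrite leqNgt; apply/negP => /h2; by rewrite leNgt hm.
Qed.

Fixpoint piZ (n : nat) (z : Z) : seq nat :=
  if n is n'.+1 then digZ n' z :: piZ n' z else [::].

Lemma size_piZ n z : size (piZ n z) = n.
Proof. by elim: n => //= n ->. Qed.

Definition cell (s : seq nat) : set Z := [set z | piZ (size s) z = s].

Lemma cell_nil : cell [::] = setT.
Proof. by apply/seteqP; split => z. Qed.

Lemma cell_cons k s : cell (k :: s) = cell s `&` [set z | digZ (size s) z = k].
Proof.
apply/seteqP; split => z /=; rewrite /cell /=.
  by case=> -> ->.
by case=> -> ->.
Qed.

Lemma cell_sub k s : cell (k :: s) `<=` cell s.
Proof. by rewrite cell_cons => z []. Qed.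

Lemma cell_bigcup s : cell s = \bigcup_k cell (k :: s).
Proof.
apply/seteqP; split => z.
  move=> hz; exists (digZ (size s) z) => //; rewrite cell_cons; split => //.
by case=> k _; apply: cell_sub.
Qed.

Lemma cell_triv s : trivIset setT (fun k => cell (k :: s)).
Proof.
apply/trivIsetP => i j _ _ ij; apply/seteqP; split => // z.
rewrite !cell_cons => -[[_ hi] [_ hj]]; move/eqP: ij; apply.
by rewrite -hi -hj.
Qed.

Lemma dist_sym x y : dist x y = dist y x.
Proof. by case: hmet. Qed.

Lemma dist_tri x y z : dist x z <= dist x y + dist y z.
Proof. by case: hmet. Qed.

Lemma dist_ge0 x y : 0 <= dist x y.
Proof. by case: hmet. Qed.

Lemma dist_xx x : dist x x = 0.
Proof. by case: hmet => _ h _ _; apply/h. Qed.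

Lemma cell_diam k s z w : cell (k :: s) z -> cell (k :: s) w ->
  dist z w < 2 * rr (size s).
Proof.
rewrite cell_cons => -[_ /digZP [hz _]] [_ /digZP [hw _]].
apply: (le_lt_trans (dist_tri z (D k) w)); rewrite dist_sym; lra.
Qed.

Definition mball (c : Z) (r : R) : set Z := [set y | dist c y < r].

Lemma mball_open c r : metric_open dist (mball c r).
Proof.
move=> y hy; exists (r - dist c y); first by rewrite subr_gt0.
move=> w /= hw; apply: (le_lt_trans (dist_tri c y w)); lra.
Qed.

Lemma open_meas A : metric_open dist A -> measurable A.
Proof. by move=> hA; rewrite hmeas; exact: sub_sigma_algebra. Qed.

Lemma mball_meas c r : measurable (mball c r).
Proof. exact/open_meas/mball_open. Qed.

Lemma digZ_meas n k : measurable [set z | digZ n z = k].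
Proof.
have -> : [set z | digZ n z = k] =
  mball (D k) (rr n) `&` [set z | forall j, (j < k)%N -> rr n <= dist (D j) z].
  by apply/seteqP; split => z /digZP.
apply: measurableI; first exact: mball_meas.
elim: k => [|k IH].
  by rewrite (_ : [set z | _] = setT) //; apply/seteqP; split.
rewrite (_ : [set z | _] = [set z | forall j, (j < k)%N -> rr n <= dist (D j) z]
   `&` ~` mball (D k) (rr n)).
  by apply: measurableI => //; apply: measurableC; exact: mball_meas.
apply/seteqP; split => z /=.
  move=> h; split; first by move=> j jk; apply: h; rewrite ltnS ltnW.
  by rewrite /mball /=; apply/negP; rewrite -leNgt; apply: h.
move=> [h1 h2] j; rewrite ltnS leq_eqVlt => /orP[/eqP ->|/h1 //].
by move/negP: h2; rewrite /mball /= -leNgt.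
Qed.

Lemma cell_meas s : measurable (cell s).
Proof.
elim: s => [|k s IH]; first by rewrite cell_nil.
by rewrite cell_cons; apply: measurableI => //; exact: digZ_meas.
Qed.

End Cells.


Section Transfer.
Local Open Scope ereal_scope.
Context {R : realType} {d1 d2 : measure_display} {T1 : measurableType d1}
  {T2 : measurableType d2} {I : countType}
  (m1 : measure T1 R) (m2 : measure T2 R)
  (f : T1 -> I) (g : T2 -> I).
Hypotheses (mf : forall i, measurable (f @^-1` [set i]))
  (mg : forall i, measurable (g @^-1` [set i]))
  (fg : forall i, m1 (f @^-1` [set i]) = m2 (g @^-1` [set i])).

Let F (A : set I) (m : nat) : set I := [set i | pickle i = m /\ A i].

Let F_cases (A : set I) m : F A m = set0 \/ exists i, F A m = [set i].
Proof.
have [[i [hi hA]]|h] := pselect (exists i, pickle i = m /\ A i).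
  right; exists i; apply/seteqP; split => j /=.
    by case=> hj _; apply: (pcan_inj (@pickleK I)); rewrite hj hi.
  by move=> ->.
left; apply/seteqP; split => j //= hj; apply: h; by exists j.
Qed.

Let F_cover (A : set I) : A = \bigcup_m F A m.
Proof.
apply/seteqP; split => i.
  by move=> hA; exists (pickle i).
by case=> m _ [].
Qed.

Let F_triv (A : set I) : trivIset setT (F A).
Proof.
apply/trivIsetP => i j _ _ ij; apply/seteqP; split => // x [[hi _] [hj _]].
by move/eqP: ij; apply; rewrite -hi -hj.
Qed.

Lemma preimage_meas_count {d} {T : measurableType d} (h : T -> I) :
  (forall i, measurable (h @^-1` [set i])) -> forall A, measurable (h @^-1` A).
Proof.
move=> mh A; rewrite (F_cover A) preimage_bigcup; apply: bigcupT_measurable => m.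
by case: (F_cases A m) => [->|[i ->]]; rewrite ?preimage_set0.
Qed.

Lemma transfer A : m1 (f @^-1` A) = m2 (g @^-1` A).
Proof.
rewrite (F_cover A) !preimage_bigcup.
have tr (h : T1 -> I) : trivIset setT (fun m => h @^-1` F A m).
  apply/trivIsetP => i j _ _ ij; rewrite -preimage_setI.
  by move/trivIsetP: (@F_triv A) => /(_ i j Logic.I Logic.I ij) ->.
have tr2 (h : T2 -> I) : trivIset setT (fun m => h @^-1` F A m).
  apply/trivIsetP => i j _ _ ij; rewrite -preimage_setI.
  by move/trivIsetP: (@F_triv A) => /(_ i j Logic.I Logic.I ij) ->.
rewrite !measure_semi_bigcup //.
- apply: eq_eseriesr => m _.
  by case: (F_cases A m) => [->|[i ->]]; rewrite ?preimage_set0 ?measure0 ?fg.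
- by move=> m; apply: preimage_meas_count.
- by rewrite -preimage_bigcup; apply: preimage_meas_count.
- by move=> m; apply: preimage_meas_count.
- by rewrite -preimage_bigcup; apply: preimage_meas_count.
Qed.

End Transfer.


Lemma m01 {R : realType} : measurable (`[0%R, 1%R[ : set R).
Proof. exact: measurable_itv. Qed.
Definition mu01 {R : realType} := mrestr (@lebesgue_measure R) m01.
Lemma mu01E {R : realType} A : @mu01 R A = LI A.
Proof. reflexivity. Qed.


Lemma nd_bigcap {T : Type} (A : nat -> set T) :
  {homo (fun m => \bigcap_k A (k + m)%N) : n m / (n <= m)%N >-> n `<=` m}.
Proof.
move=> m m' mm' x hx k _; rewrite -(subnK mm') addnA; exact: hx.
Qed.

Lemma mono_bound {d} {T : measurableType d} {R : realType} (mu : measure T R)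
  (F : nat -> set T) (c : \bar R) :
  (forall m, measurable (F m)) ->
  {homo F : n m / (n <= m)%N >-> n `<=` m} ->
  (forall m, (mu (F m) <= c)%E) -> (mu (\bigcup_m F m) <= c)%E.
Proof.
move=> mF ndF hc.
have ndF' : nondecreasing_seq F by move=> n m nm; apply/subsetPset; exact: ndF.
have h := nondecreasing_cvg_mu (mu:=mu) mF (bigcupT_measurable F mF) ndF'.
rewrite -(cvg_lim _ h) //; apply: lime_le; first exact: (cvgP _ h).
by apply: nearW => m; exact: hc.
Qed.

Section Param.
Local Open Scope ring_scope.
Context {R : realType} {d : measure_display} {Z : measurableType d}
  (dist : Z -> Z -> R) (D : nat -> Z).
Hypotheses (hmet : is_metric dist)
  (hD : forall x e, 0 < e -> exists n, dist (D n) x < e)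
  (hmeas : @measurable d Z = <<s [set A | metric_open dist A] >>).
Variable P : probability Z R.

Let cmeas s : measurable (cell dist D s) := cell_meas hmet hD hmeas s.

Definition pm s : R := fine (P (cell dist D s)).

Lemma pmE s : ((pm s)%:E = P (cell dist D s))%E.
Proof. by rewrite /pm fineK // fin_num_measure. Qed.

Lemma pm_nil : pm [::] = 1.
Proof. by rewrite /pm cell_nil probability_setT. Qed.

Lemma pm_ge0 s : 0 <= pm s.
Proof. by rewrite /pm fine_ge0. Qed.

Lemma Pseries s : (P (cell dist D s) = \sum_(k <oo) P (cell dist D (k :: s)))%E.
Proof.
rewrite {1}(cell_bigcup dist D s) measure_semi_bigcup //.
  exact: cell_triv.
by rewrite -cell_bigcup.
Qed.

Lemma psumE s k : ((\sum_(j < k) pm ((j : nat) :: s))%:E =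
  \sum_(0 <= j < k) P (cell dist D (j :: s)))%E.
Proof.
rewrite -sumEFin big_mkord; apply: eq_bigr => j _; exact: pmE.
Qed.

Lemma pm_psum s k : \sum_(j < k) pm ((j : nat) :: s) <= pm s.
Proof.
rewrite -lee_fin psumE pmE Pseries; exact: nneseries_lim_ge.
Qed.

Lemma pm_pex s u : u < pm s -> exists k, u < \sum_(j < k) pm ((j : nat) :: s).
Proof.
move=> us; apply: contrapT => hn.
have hle : forall k, \sum_(j < k) pm ((j : nat) :: s) <= u.
  move=> k; rewrite leNgt; apply/negP => h; apply: hn; by exists k.
have : (P (cell dist D s) <= u%:E)%E.
  rewrite Pseries.
  have hc := ereal_nondecreasing_cvgn
    (@ereal_nondecreasing_series R (fun j => P (cell dist D (j :: s))) xpredT 0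
      (fun n _ _ => measure_ge0 _ _)).
  rewrite (cvg_lim _ hc) //.
  apply: ub_ereal_sup => _ [k _ <-]; rewrite -psumE lee_fin; exact: hle.
by rewrite -(pmE s) lee_fin leNgt us.
Qed.

Definition clamp (t : R) : R := if (0 <= t) && (t < 1) then t else 0.

Lemma clamp01 t : 0 <= clamp t < 1.
Proof. by rewrite /clamp; case: ifP => // _; rewrite lexx ltr01. Qed.

Lemma clampE t : 0 <= t < 1 -> clamp t = t.
Proof. by rewrite /clamp => ->. Qed.

Lemma clampN t : ~ (`[0%R, 1%R[%classic : set R) t -> clamp t = 0.
Proof. by rewrite /= in_itv /clamp /= => /negP/negbTE ->. Qed.

Definition pathI n t := path' pm n (clamp t).

Lemma size_pathI n t : size (pathI n t) = n.
Proof. exact: size_path'. Qed.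

Lemma size_piZ' n z : size (piZ dist D n z) = n.
Proof. exact: size_piZ. Qed.

Lemma pathI_fib n s t : size s = n -> 0 <= t < 1 ->
  (pathI n t = s <-> aL pm s <= t < aL pm s + pm s).
Proof.
move=> hs ht; rewrite /pathI clampE //.
exact: (path'P pm_nil pm_ge0 pm_psum pm_pex ht hs).
Qed.

Lemma itv_memE (a b t : R) : (`[a, b[%classic : set R) t = (a <= t < b).
Proof. by rewrite /= in_itv. Qed.

Lemma pathI_setI n s : size s = n ->
  pathI n @^-1` [set s] `&` `[0%R, 1%R[%classic = `[aL pm s, aL pm s + pm s[%classic.
Proof.
move=> hs; apply/seteqP; split => t /=.
  move=> [h1]; rewrite !in_itv /= => h2.
  exact/(pathI_fib hs h2).
rewrite !in_itv /= => h.
have [a0 a1] := aL_bounds pm_nil pm_ge0 pm_psum s.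
have ht : 0 <= t < 1.
  move: h => /andP[? ?]; apply/andP; split; lra.
by split; [exact/(pathI_fib hs ht)|].
Qed.

Lemma pathI_meas n s : measurable (pathI n @^-1` [set s]).
Proof.
have -> : pathI n @^-1` [set s] = (pathI n @^-1` [set s] `&` `[0%R, 1%R[%classic) `|`
   (~` `[0%R, 1%R[%classic `&` [set t | path' pm n 0 = s]).
  apply/seteqP; split => t /=.
    move=> h; have [ht|ht] := pselect ((`[0%R, 1%R[%classic : set R) t).
      by left.
    by right; split => //; rewrite -h /pathI clampN.
  by case=> [[]//|[ht]]; rewrite /pathI clampN.
apply: measurableU.
  have [hs|hs] := eqVneq (size s) n.
    by rewrite pathI_setI //; exact: measurable_itv.
  rewrite (_ : _ `&` _ = set0) //; apply/seteqP; split => t //= [h _].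
  by move: hs; rewrite -h size_pathI eqxx.
apply: measurableI; first by apply: measurableC; exact: measurable_itv.
have [e|e] := eqVneq (path' pm n 0) s.
  by rewrite (_ : [set _ | _] = setT) //; apply/seteqP; split.
by rewrite (_ : [set _ | _] = set0) //; apply/seteqP; split => //= t /eqP; rewrite (negbTE e).
Qed.

Lemma piZ_meas n s : measurable (piZ dist D n @^-1` [set s]).
Proof.
have [hs|hs] := eqVneq (size s) n.
  by rewrite -hs; exact: cmeas.
rewrite (_ : _ @^-1` _ = set0) //; apply/seteqP; split => z //= h.
by move: hs; rewrite -h size_piZ eqxx.
Qed.

Lemma pathI_mu1 n s : mu01 (pathI n @^-1` [set s]) = P (piZ dist D n @^-1` [set s]).
Proof.
have [hs|hs] := eqVneq (size s) n.
  rewrite mu01E /LI pathI_setI // lebesgue_measure_itv /= -hs -[_ @^-1` _]/(cell dist D s).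
  rewrite -pmE lte_fin ltrDl; case: ltgtP (pm_ge0 s) => // [h _|<- _].
    by rewrite -EFinD addrAC subrr add0r.
  by [].
rewrite (_ : pathI n @^-1` _ = set0); last first.
  apply/seteqP; split => t //= h; by move: hs; rewrite -h size_pathI eqxx.
rewrite (_ : _ @^-1` _ = set0) ?measure0 //; apply/seteqP; split => z //= h.
by move: hs; rewrite -h size_piZ eqxx.
Qed.

Lemma pathI_transfer n A : mu01 (pathI n @^-1` A) = P (piZ dist D n @^-1` A).
Proof.
apply: (@transfer _ _ _ _ _ _ mu01 P); [exact: pathI_meas|exact: piZ_meas|exact: pathI_mu1].
Qed.

Lemma pathI_measA n A : measurable (pathI n @^-1` A).
Proof. by apply: preimage_meas_count; exact: pathI_meas. Qed.

Lemma piZ_measA n A : measurable (piZ dist D n @^-1` A).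
Proof. by apply: preimage_meas_count; exact: piZ_meas. Qed.

Lemma rr_small (e : R) : 0 < e -> exists N, rr N < e.
Proof. by move=> e0; have [k hk] := ltr_add_invr e0; exists k; rewrite add0r in hk. Qed.

Lemma rr_mono n m : (n <= m)%N -> @rr R m <= rr n.
Proof. by move=> nm; rewrite /rr lef_pV2 ?posrE ?ltr0n // ler_nat. Qed.

Definition zpt (s : seq nat) : Z := xget point (cell dist D s).

Lemma zptP s : cell dist D s !=set0 -> cell dist D s (zpt s).
Proof. by move=> [z hz]; apply: xgetPex; exists z. Qed.

Lemma pathI_ne n t : cell dist D (pathI n t) !=set0.
Proof.
apply/set0P/eqP => h.
have := path'P pm_nil pm_ge0 pm_psum pm_pex (clamp01 t) (size_pathI n t).
case=> + _ => /(_ erefl) /andP[h1 h2].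
have : 0 < pm (pathI n t) by lra.
by rewrite /pm h measure0 /= ltxx.
Qed.

Lemma pathI_sub n m t : (n <= m)%N -> cell dist D (pathI m t) `<=` cell dist D (pathI n t).
Proof.
elim: m => [|m IH]; first by rewrite leqn0 => /eqP ->.
rewrite leq_eqVlt => /orP[/eqP -> //|]; rewrite ltnS => /IH h.
by apply: subset_trans h; exact: cell_sub.
Qed.

Definition Phin (n : nat) (t : R) : Z := zpt (pathI n.+1 t).

Lemma Phin_cell n m t : (n <= m)%N -> cell dist D (pathI n.+1 t) (Phin m t).
Proof. by move=> nm; apply: (pathI_sub (n := n.+1) (m := m.+1)) => //; exact/zptP/pathI_ne. Qed.

Lemma Phin_close n m t : (n <= m)%N -> dist (Phin n t) (Phin m t) < 2 * rr n.
Proof.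
move=> nm; have := @cell_diam _ _ _ dist D hmet hD (digit pm (pathI n t) (clamp t)) (pathI n t).
rewrite size_pathI; apply; [exact: (Phin_cell t (leqnn n))|exact: (Phin_cell t nm)].
Qed.

Hypothesis hc : metric_complete dist.

Definition Phi (t : R) : Z := xget point
  [set x | forall e, 0 < e -> exists N, forall n, (N <= n)%N -> dist (Phin n t) x < e].

Lemma Phi_lim t e : 0 < e -> exists N, forall n, (N <= n)%N -> dist (Phin n t) (Phi t) < e.
Proof.
move: e; apply: (@xgetPex _ point
  [set x | forall e, 0 < e -> exists N, forall n, (N <= n)%N -> dist (Phin n t) x < e]).
apply: hc => e e0.
have [N hN] := rr_small (e := e / 4) ltac:(by rewrite divr_gt0).
exists N => m n hm hn.
apply: (le_lt_trans (dist_tri hmet _ (Phin N t) _)).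
rewrite (dist_sym hmet (Phin m t)).
have h1 := Phin_close t hm; have h2 := Phin_close t hn; lra.
Qed.

Lemma Phi_close n t : dist (Phin n t) (Phi t) <= 2 * rr n.
Proof.
apply/ler_addgt0Pr => e e0.
have [N hN] := Phi_lim t e0.
apply: (le_trans (dist_tri hmet _ (Phin (maxn n N) t) _)).
have := Phin_close t (leq_maxl n N); have := hN _ (leq_maxr n N); lra.
Qed.

Definition Sset (G : set Z) n := [set z | mball dist z (4 * rr n) `<=` G].
Definition Wset (G : set Z) n := piZ dist D n.+1 @^-1` (zpt @^-1` Sset G n).

Lemma Phin_meas n A : measurable (Phin n @^-1` A).
Proof. exact: (pathI_measA n.+1 (zpt @^-1` A)). Qed.

Lemma Phin_mu n A : mu01 (Phin n @^-1` A) = P (piZ dist D n.+1 @^-1` (zpt @^-1` A)).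
Proof. exact: (pathI_transfer n.+1 (zpt @^-1` A)). Qed.

Lemma zpt_piZ n z : dist (zpt (piZ dist D n.+1 z)) z < 2 * rr n.
Proof.
have hz : cell dist D (piZ dist D n.+1 z) z by rewrite /cell /= size_piZ.
have hne : cell dist D (piZ dist D n.+1 z) !=set0 by exists z.
have := @cell_diam _ _ _ dist D hmet hD (digZ dist D n z) (piZ dist D n z).
rewrite size_piZ; apply; [exact: zptP|exact: hz].
Qed.

Lemma Sset_a G n : Phin n @^-1` Sset G n `<=` Phi @^-1` G.
Proof.
move=> t /= h; apply: h; rewrite /mball /=.
have := Phi_close n t; have := @rr_gt0 R n; lra.
Qed.

Lemma Sset_b G n : Wset G n `<=` G.
Proof.
move=> z /= h; apply: h; rewrite /mball /=.
have := zpt_piZ n z; have := @rr_gt0 R n; lra.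
Qed.

Lemma Sset_c G : metric_open dist G -> G `<=` \bigcup_m \bigcap_k Wset G (k + m).
Proof.
move=> hG z /hG [r r0 hr].
have [m hm] := rr_small (e := r / 6) ltac:(by rewrite divr_gt0).
exists m => // k _ y /= hy; apply: hr => /=.
apply: (le_lt_trans (dist_tri hmet _ (zpt (piZ dist D (k + m).+1 z)) _)).
have := zpt_piZ (k + m) z; have := rr_mono (leq_addl k m).
rewrite (dist_sym hmet z); move: hy; rewrite /mball /=; lra.
Qed.

Lemma Sset_d G : metric_open dist G ->
  Phi @^-1` G `<=` \bigcup_m \bigcap_k (Phin (k + m) @^-1` Sset G (k + m)).
Proof.
move=> hG t /hG [r r0 hr].
have [m hm] := rr_small (e := r / 6) ltac:(by rewrite divr_gt0).
exists m => // k _ y /= hy; apply: hr => /=.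
apply: (le_lt_trans (dist_tri hmet _ (Phin (k + m) t) _)).
have := Phi_close (k + m) t; have := rr_mono (leq_addl k m).
rewrite (dist_sym hmet (Phi t)); move: hy; rewrite /mball /=; lra.
Qed.

Lemma Phi_preE G : metric_open dist G ->
  Phi @^-1` G = \bigcup_m \bigcap_k (Phin (k + m) @^-1` Sset G (k + m)).
Proof.
move=> hG; apply/seteqP; split; first exact: Sset_d.
by move=> t [m _ /(_ 0%N Logic.I)]; rewrite add0n; exact: Sset_a.
Qed.

Lemma Phi_mfun : measurable_fun setT Phi.
Proof.
apply: (measurability _ hmeas).
move=> _ [G hG <-].
rewrite setTI Phi_preE //; apply: bigcupT_measurable => m.
by apply: bigcapT_measurable => k; exact: Phin_meas.
Qed.

Lemma Phi_law_open G : metric_open dist G -> mu01 (Phi @^-1` G) = P G.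
Proof.
move=> hG; have mG := open_meas hmeas hG.
have mW n : measurable (Wset G n) by exact: piZ_measA.
apply/eqP; rewrite eq_le; apply/andP; split.
- rewrite Phi_preE //; apply: mono_bound.
  + by move=> m; apply: bigcapT_measurable => k; exact: Phin_meas.
  + by move=> a b ab x hx k _; rewrite -(subnK ab) addnA; exact: hx.
  + move=> m; apply: (@le_trans _ _ (mu01 (Phin m @^-1` Sset G m))).
      apply: le_measure; rewrite ?inE.
      * by apply: bigcapT_measurable => k; exact: Phin_meas.
      * exact: Phin_meas.
      * by move=> t /(_ 0%N Logic.I); rewrite add0n.
    by rewrite Phin_mu; apply: le_measure; rewrite ?inE; [exact: piZ_measA|exact: mG|exact: Sset_b].
- apply: (@le_trans _ _ (P (\bigcup_m \bigcap_k Wset G (k + m)))).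
    apply: le_measure; rewrite ?inE //; last exact: Sset_c.
    by apply: bigcupT_measurable => m; apply: bigcapT_measurable.
  apply: mono_bound.
  + by move=> m; apply: bigcapT_measurable.
  + by move=> a b ab x hx k _; rewrite -(subnK ab) addnA; exact: hx.
  + move=> m; apply: (@le_trans _ _ (P (Wset G m))).
      apply: le_measure; rewrite ?inE //; first by apply: bigcapT_measurable.
      by move=> z /(_ 0%N Logic.I); rewrite add0n.
    rewrite /Wset -Phin_mu; apply: le_measure; rewrite ?inE.
    * exact: Phin_meas.
    * rewrite -[X in measurable X]setTI; exact: Phi_mfun.
    * exact: Sset_a.
Qed.

Lemma open_setI : setI_closed [set A | metric_open dist A].
Proof.
move=> A B hA hB x [xa xb].
have [e1 e10 h1] := hA x xa; have [e2 e20 h2] := hB x xb.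
exists (Num.min e1 e2); first by rewrite lt_min e10 e20.
by move=> y /= hy; move: hy; rewrite lt_min => /andP[y1 y2]; split; [exact: h1|exact: h2].
Qed.

Lemma open_setT : metric_open dist setT.
Proof. by move=> x _; exists 1 => //; rewrite ltr01. Qed.

Theorem param_exists : exists Phi0 : (R -> Z), (measurable_fun setT Phi0 /\
  (forall A, measurable A -> LI (Phi0 @^-1` A) = P A)).
Proof.
exists Phi; split; first exact: Phi_mfun.
move=> A mA.
pose m1 := measure_function_pushforward__canonical__measure_function_Measure mu01 Phi_mfun.
have := @measure_unique _ _ _ [set A | metric_open dist A] (fun _ => setT) hmeas open_setI
  (fun _ => open_setT) (bigcup_const _ _) m1 P.
apply => //.
- by move=> B hB; exact: Phi_law_open.
- move=> _; rewrite (_ : m1 setT = P setT); first by rewrite probability_setT ltry.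
  exact: Phi_law_open open_setT.
Qed.

End Param.


Section Prod.
Local Open Scope ring_scope.
Context {R : realType} {dX dY : measure_display} {X : measurableType dX}
  {Y : measurableType dY} (distX : X -> X -> R) (distY : Y -> Y -> R).
Hypotheses (hX : mm_space distX) (hY : mm_space distY).

Definition distZ (p q : X * Y) : R := distX p.1 q.1 + distY p.2 q.2.

Let mX : is_metric distX. Proof. by case: hX. Qed.
Let mY : is_metric distY. Proof. by case: hY. Qed.

Lemma distZ_metric : is_metric distZ.
Proof.
have [X0 X1 X2 X3] := mX; have [Y0 Y1 Y2 Y3] := mY.
split.
- by move=> p q; rewrite /distZ addr_ge0.
- move=> [x1 y1] [x2 y2]; rewrite /distZ /=; split.
    move=> h; have hx := X0 x1 x2; have hy := Y0 y1 y2.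
    have ex : distX x1 x2 = 0 by lra.
    have ey : distY y1 y2 = 0 by lra.
    by rewrite ((X1 _ _).1 ex) ((Y1 _ _).1 ey).
  by case=> -> ->; rewrite ((X1 _ _).2 erefl) ((Y1 _ _).2 erefl) addr0.
- by move=> p q; rewrite /distZ X2 Y2.
- move=> p q r; rewrite /distZ.
  have := X3 p.1 q.1 r.1; have := Y3 p.2 q.2 r.2; lra.
Qed.

Lemma distZ_complete : metric_complete distZ.
Proof.
have [_ cX _ _] := hX; have [_ cY _ _] := hY.
have [X0 _ _ _] := mX; have [Y0 _ _ _] := mY.
move=> u hu.
have [x hx] : exists x, forall e, 0 < e -> exists N, forall n, (N <= n)%N -> distX (u n).1 x < e.
  apply: cX => e e0; have [N hN] := hu e e0; exists N => m n hm hn.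
  have := hN m n hm hn; rewrite /distZ; have := Y0 (u m).2 (u n).2; lra.
have [y hy] : exists y, forall e, 0 < e -> exists N, forall n, (N <= n)%N -> distY (u n).2 y < e.
  apply: cY => e e0; have [N hN] := hu e e0; exists N => m n hm hn.
  have := hN m n hm hn; rewrite /distZ; have := X0 (u m).1 (u n).1; lra.
exists (x, y) => e e0.
have e2 : 0 < e / 2 by rewrite divr_gt0.
have [N1 h1] := hx _ e2; have [N2 h2] := hy _ e2.
exists (maxn N1 N2) => n hn; rewrite /distZ /=.
have := h1 n (leq_trans (leq_maxl _ _) hn); have := h2 n (leq_trans (leq_maxr _ _) hn); lra.
Qed.

Lemma distZ_sep : exists DZ : nat -> X * Y,
  forall z e, 0 < e -> exists n, distZ (DZ n) z < e.
Proof.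
have [_ _ [Dx hDx] _] := hX; have [_ _ [Dy hDy] _] := hY.
exists (fun n => match @unpickle (nat * nat)%type n with
         | Some ij => (Dx ij.1, Dy ij.2) | None => (Dx 0%N, Dy 0%N) end).
move=> [x y] e e0; have e2 : 0 < e / 2 by rewrite divr_gt0.
have [i hi] := hDx x _ e2; have [j hj] := hDy y _ e2.
exists (pickle (i, j)); rewrite pickleK /distZ /=; lra.
Qed.

Lemma open_fst (B : set X) : metric_open distX B -> metric_open distZ (fst @^-1` B).
Proof.
have [_ _ _ _] := mY; have [Y0 _ _ _] := mY.
move=> hB z /= /hB [e e0 he]; exists e => // w /= hw; apply: he => /=.
move: hw; rewrite /distZ; have := Y0 z.2 w.2; lra.
Qed.

Lemma open_snd (B : set Y) : metric_open distY B -> metric_open distZ (snd @^-1` B).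
Proof.
have [X0 _ _ _] := mX.
move=> hB z /= /hB [e e0 he]; exists e => // w /= hw; apply: he => /=.
move: hw; rewrite /distZ; have := X0 z.1 w.1; lra.
Qed.

Lemma distZ_meas : @measurable _ (X * Y)%type = <<s [set A | metric_open distZ A] >>.
Proof.
have [_ _ [Dx hDx] eX] := hX; have [_ _ [Dy hDy] eY] := hY.
apply/seteqP; split.
- apply: smallest_sub; first exact: smallest_sigma_algebra.
  move=> A [[B mB <-]|[B mB <-]].
  + have h2 : <<s setT, preimage_set_system (setT : set (X * Y)) fst [set A | metric_open distX A] >>
        ((setT : set (X * Y)) `&` fst @^-1` B).
      rewrite g_sigma_preimageE.
      exists B => //; move: mB; rewrite eX; exact.
    apply: (smallest_sub _ _ h2); first exact: smallest_sigma_algebra.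
    move=> _ [C hC <-]; apply: sub_sigma_algebra; rewrite setTI; exact: open_fst.
  + have h2 : <<s setT, preimage_set_system (setT : set (X * Y)) snd [set A | metric_open distY A] >>
        ((setT : set (X * Y)) `&` snd @^-1` B).
      rewrite g_sigma_preimageE.
      exists B => //; move: mB; rewrite eY; exact.
    apply: (smallest_sub _ _ h2); first exact: smallest_sigma_algebra.
    move=> _ [C hC <-]; apply: sub_sigma_algebra; rewrite setTI; exact: open_snd.
- apply: smallest_sub; first exact: sigma_algebra_measurable.
  move=> G hG.
  pose rect (n : nat) : set (X * Y) := match @unpickle (nat * nat * nat)%type n with
    | Some ijq => mball distX (Dx ijq.1.1) (rr ijq.2) `*` mball distY (Dy ijq.1.2) (rr ijq.2)
    | None => set0 end.
  pose Rn n := if pselect (rect n `<=` G) is left _ then rect n else set0.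
  have -> : G = \bigcup_n Rn n.
    apply/seteqP; split => [z hz|z [n _]]; last first.
      by rewrite /Rn; case: pselect => // h /h.
    have [r r0 hr] := hG z hz.
    have [q hq] := rr_small (R := R) (e := r / 4) ltac:(by rewrite divr_gt0).
    have [i hi] := hDx z.1 _ (rr_gt0 (R := R) q).
    have [j hj] := hDy z.2 _ (rr_gt0 (R := R) q).
    exists (pickle (i, j, q)) => //.
    have hsub : rect (pickle (i, j, q)) `<=` G.
      rewrite /rect pickleK /= => w [/= w1 w2]; apply: hr => /=.
      rewrite /distZ.
      have := dist_tri mX z.1 (Dx i) w.1; have := dist_tri mY z.2 (Dy j) w.2.
      rewrite (dist_sym mX z.1 (Dx i)) (dist_sym mY z.2 (Dy j)).
      move: w1 w2 hi hj; rewrite /mball /=; lra.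
    rewrite /Rn; case: pselect => // _.
    by rewrite /rect pickleK /=; split; rewrite /mball /=.
  apply: bigcupT_measurable => n; rewrite /Rn; case: pselect => // _.
  rewrite /rect; case: unpickle => // ijq.
  apply: measurableX; apply: open_meas; [exact: eX|exact: mball_open|exact: eY|exact: mball_open].
Qed.

End Prod.


Section DH.
Context {R : realType}.

Lemma dKF_eq {Z W : Type} (mu : set Z -> \bar R) (nu : set W -> \bar R)
  (f1 g1 : Z -> R) (f2 g2 : W -> R) :
  (forall e : R, mu [set z | (e < `|f1 z - g1 z|)%R] = nu [set w | (e < `|f2 w - g2 w|)%R]) ->
  dKF mu f1 g1 = dKF nu f2 g2.
Proof.
move=> h; rewrite /dKF; congr (ereal_inf _); apply/seteqP; split => _ [e [e0 he] <-];
  exists e => //; split => //; by rewrite ?h // -?h.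
Qed.

Lemma dH_eq {Z X Y : Type} (mu : set Z -> \bar R) (nu : set (X * Y) -> \bar R)
  (a : Z -> X) (b : Z -> Y) (L1 : set (X -> R)) (L2 : set (Y -> R)) :
  (forall G1 G2, L1 G1 -> L2 G2 -> forall e : R,
     mu [set z | (e < `|G1 (a z) - G2 (b z)|)%R] = nu [set w | (e < `|G1 w.1 - G2 w.2|)%R]) ->
  dH_KF mu (pullback a L1) (pullback b L2) = dH_KF nu (pullback fst L1) (pullback snd L2).
Proof.
move=> h; rewrite /dH_KF /pullback; congr (Order.max _ _).
- congr (ereal_sup _); rewrite !image_comp; apply: eq_imagel => G1 h1 /=.
  congr (ereal_inf _); rewrite !image_comp; apply: eq_imagel => G2 h2 /=.
  exact: dKF_eq (h _ _ h1 h2).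
- congr (ereal_sup _); rewrite !image_comp; apply: eq_imagel => G2 h2 /=.
  congr (ereal_inf _); rewrite !image_comp; apply: eq_imagel => G1 h1 /=.
  exact: dKF_eq (h _ _ h1 h2).
Qed.

Lemma LI_congr (A B : set R) :
  (forall t, (0 <= t < 1)%R -> (A t <-> B t)) -> LI A = LI B.
Proof.
move=> h; rewrite /LI; congr (lebesgue_measure _); apply/seteqP; split => t /= [ht];
  rewrite in_itv /= => h01; split; rewrite ?in_itv //=; by apply/(h t h01).
Qed.

End DH.

Lemma clamp_mfun {R : realType} {d} {T : measurableType d} (f : R -> T) :
  measurable_fun (`[0%R, 1%R[ : set R) f -> measurable_fun setT (f \o clamp).
Proof.
move=> mf _ B mB; rewrite setTI.
have -> : (f \o clamp) @^-1` B = (`[0%R, 1%R[ `&` f @^-1` B) `|`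
    (~` `[0%R, 1%R[ `&` [set t | B (f 0%R)]).
  apply/seteqP; split => t /=.
    move=> h; have [ht|ht] := pselect ((`[0%R, 1%R[ : set R) t).
      left; split => //; move: h; rewrite clampE //; by move: ht; rewrite /= in_itv.
    by right; split => //; move: h; rewrite clampN.
  case=> [[ht h]|[ht h]]; last by rewrite clampN.
  by rewrite clampE //; move: ht; rewrite /= in_itv.
apply: measurableU; first exact: mf (measurable_itv _) _ mB.
apply: measurableI; first by apply: measurableC; exact: measurable_itv.
have [h|h] := pselect (B (f 0%R)).
  by rewrite (_ : [set _ | _] = setT) //; apply/seteqP; split.
by rewrite (_ : [set _ | _] = set0) //; apply/seteqP; split.
Qed.

Section Cpl.
Context {R : realType} {dX dY : measure_display} {X : measurableType dX}
  {Y : measurableType dY} (mX : probability X R) (mY : probability Y R)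
  (phi : R -> X) (psi : R -> Y).
Hypotheses (hphi : is_parameter mX phi) (hpsi : is_parameter mY psi).

Definition Psi (t : R) : X * Y := (phi (clamp t), psi (clamp t)).

Lemma Psi_mfun : measurable_fun setT Psi.
Proof.
apply: measurable_fun_pair; apply: clamp_mfun; [exact: hphi.1|exact: hpsi.1].
Qed.

Definition Pc (h1 : is_parameter mX phi) (h2 : is_parameter mY psi) :
  set (X * Y) -> \bar R := fun A => mu01 (Psi @^-1` A).

Let M := measure_function_pushforward__canonical__measure_function_Measure mu01 Psi_mfun.

Let Pc0 : Pc hphi hpsi set0 = 0%E. Proof. exact: (measure0 M). Qed.
Let Pc_ge0 A : (0 <= Pc hphi hpsi A)%E. Proof. exact: (measure_ge0 M). Qed.
Let Pc_sa : semi_sigma_additive (Pc hphi hpsi).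
Proof. exact (@measure_semi_sigma_additive _ _ _ M). Qed.

HB.instance Definition _ := isMeasure.Build _ _ _ (Pc hphi hpsi) Pc0 Pc_ge0 Pc_sa.

Let Pc_setT : Pc hphi hpsi setT = 1%E.
Proof.
rewrite /Pc mu01E preimage_setT /LI setTI lebesgue_measure_itv /= lte_fin ltr01.
by rewrite oppr0 adde0.
Qed.

HB.instance Definition _ := Measure_isProbability.Build _ _ _ (Pc hphi hpsi) Pc_setT.

Lemma Pc_coupling : is_coupling mX mY (Pc hphi hpsi).
Proof.
split => [A mA|B mB].
- change (LI (Psi @^-1` (A `*` setT)) = mX A).
  rewrite -(hphi.2 A mA); apply: LI_congr => t ht /=.
  by rewrite /Psi clampE //; split => [[]|].
- change (LI (Psi @^-1` (setT `*` B)) = mY B).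
  rewrite -(hpsi.2 B mB); apply: LI_congr => t ht /=.
  by rewrite /Psi clampE //; split => [[]|].
Qed.

End Cpl.

Section Lip.
Local Open Scope ring_scope.
Context {R : realType} {dX dY : measure_display} {X : measurableType dX}
  {Y : measurableType dY} (distX : X -> X -> R) (distY : Y -> Y -> R).

Lemma lip_open (G1 : X -> R) (G2 : Y -> R) (e : R) : Lip1 distX G1 -> Lip1 distY G2 ->
  metric_open (distZ distX distY) [set w | (e < `|G1 w.1 - G2 w.2|)%R].
Proof.
move=> h1 h2 w /= hw.
exists (`|G1 w.1 - G2 w.2| - e)%R; first by rewrite subr_gt0.
move=> w' /= hw'.
have n1 : (`|G1 w.1 - G2 w.2| <= `|G1 w'.1 - G2 w'.2| +
    `|(G1 w.1 - G1 w'.1) - (G2 w.2 - G2 w'.2)|)%R.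
  apply: le_trans (ler_normD _ _); rewrite le_eqVlt; apply/orP; left; apply/eqP.
  congr (`|_|)%R; ring.
have n2 := ler_normB (G1 w.1 - G1 w'.1) (G2 w.2 - G2 w'.2).
have n3 := h1 w.1 w'.1; have n4 := h2 w.2 w'.2.
move: hw'; rewrite /distZ; lra.
Qed.

End Lip.

Unset Implicit Arguments.

Theorem proposition5p5 (R : realType) (dX dY : measure_display)
    (X : measurableType dX) (Y : measurableType dY)
    (distX : X -> X -> R) (distY : Y -> Y -> R)
    (mX : probability X R) (mY : probability Y R) :
  mm_space distX -> mm_space distY ->
  dconc distX distY mX mY =
  ereal_inf [set dconc_pi distX distY P |
               P in [set P : probability (X * Y)%type R | is_coupling mX mY P]].
Proof.
move=> hX hY; rewrite /dconc; congr (ereal_inf _); apply/seteqP; split.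
- move=> _ [phi [psi [hphi hpsi ->]]].
  exists (Pc hphi hpsi : probability (X * Y)%type R); first exact: Pc_coupling.
  rewrite /dconc_pi; symmetry; apply: dH_eq => G1 G2 h1 h2 e.
  change (LI [set t | (e < `|G1 (phi t) - G2 (psi t)|)%R] =
          LI (Psi phi psi @^-1` [set w | (e < `|G1 w.1 - G2 w.2|)%R])).
  by apply: LI_congr => t ht /=; rewrite /Psi clampE.
- move=> _ [P hP <-].
  have [DZ hDZ] := distZ_sep hX hY.
  have [Phi [mPhi hPhi]] := param_exists (distZ_metric hX hY) hDZ (distZ_meas hX hY) P
    (distZ_complete hX hY).
  have mfst : measurable_fun (`[0%R, 1%R[ : set R) (fst \o Phi).
    apply: (measurable_funS measurableT (subsetT _)).
    exact: measurableT_comp measurable_fst mPhi.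
  have msnd : measurable_fun (`[0%R, 1%R[ : set R) (snd \o Phi).
    apply: (measurable_funS measurableT (subsetT _)).
    exact: measurableT_comp measurable_snd mPhi.
  exists (fst \o Phi), (snd \o Phi); split.
  + split => // A mA; rewrite -(hP.1 A mA) -hPhi; last exact: measurableX.
    by congr LI; apply/seteqP; split => t /=; [move=> h; split|case].
  + split => // B mB; rewrite -(hP.2 B mB) -hPhi; last exact: measurableX.
    by congr LI; apply/seteqP; split => t /=; [move=> h; split|case].
  + rewrite /dconc_pi; symmetry; apply: dH_eq => G1 G2 h1 h2 e.
    apply: hPhi; apply: (open_meas (distZ_meas hX hY)); exact: lip_open.
Qed.
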